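(* Let $\lambda,t_0,t_1\in\mathbb{R}$, let $T:\mathbb{Z}\to\mathbb{R}$ be the $2$-periodic sequence with $T(2j)=t_0$, $T(2j+1)=t_1$, and let $\omega\in\mathbb{R}$ with $\omega/2\pi$ irrational. If $t_0=0$, then the Lyapunov exponent of the periodic coupling AMO model satisfies $L(0)=0$, regardless of the value of $t_1$.
   Context: The periodic coupling AMO model is the family of operators on $\ell^2(\mathbb{Z})$, $(H_\theta u)(n)=u(n+1)+u(n-1)+\lambda T(n)\cos(\theta+n\omega)u(n)$, $\theta\in S^1=\mathbb{R}/2\pi\mathbb{Z}$. For $E\in\mathbb{R}$ and $h\in\{0,1\}$ let $A_E(\theta,h)=\begin{pmatrix}E-\lambda T(h)\cos\theta&-1\\1&0\end{pmatrix}$, and let $B_E(\theta)=A_E(\theta+\omega,1)A_E(\theta,0)$, viewed as a cocycle over the rotation $\theta\mapsto\theta+2\omega$ on $S^1$, with $B_E^m(\theta)=B_E(\theta+2(m-1)\omega)\cdots B_E(\theta+2\omega)B_E(\theta)$. The Lyapunov exponent is $L(E)=\lim_{m\to\infty}\frac{1}{2m}\int_{S^1}\log\|B_E^m(\theta)\|\frac{d\theta}{2\pi}$ (equivalently, the Lyapunov exponent of the one-step cocycle over $S^1\times\mathbb{Z}_2$ with respect to the uniform product measure); in particular $L(E)=0$ iff the exponent of the cocycle $(2\omega,B_E)$ is zero. *)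

(* Defs.v *)
From Stdlib Require Import Reals ZArith QArith.
From Coquelicot Require Import Coquelicot.
Open Scope R_scope.

(* 2x2 real matrices ((a,b),(c,d)) = [[a,b],[c,d]] *)
Definition mat2 : Type := ((R * R) * (R * R))%type.

Definition mat2_mul (M N : mat2) : mat2 :=
  let '((a, b), (c, d)) := M in
  let '((e, f), (g, h)) := N in
  ((a * e + b * g, a * f + b * h), (c * e + d * g, c * f + d * h)).

Definition mat2_id : mat2 := ((1, 0), (0, 1)).

Definition mat2_apply_norm (M : mat2) (x y : R) : R :=
  let '((a, b), (c, d)) := M in
  sqrt ((a * x + b * y) ^ 2 + (c * x + d * y) ^ 2).

Definition opnorm (M : mat2) : R :=
  real (Lub_Rbar (fun r => exists x y : R,
          x ^ 2 + y ^ 2 = 1 /\ r = mat2_apply_norm M x y)).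

Definition Tper (t0 t1 : R) (n : Z) : R := if Z.even n then t0 else t1.

Definition A_E (lam : R) (T : Z -> R) (E theta : R) (h : Z) : mat2 :=
  ((E - lam * T h * cos theta, -1), (1, 0)).

Definition B_E (lam omega : R) (T : Z -> R) (E theta : R) : mat2 :=
  mat2_mul (A_E lam T E (theta + omega) 1%Z) (A_E lam T E theta 0%Z).

Fixpoint B_E_iter (lam omega : R) (T : Z -> R) (E : R) (m : nat) (theta : R)
  : mat2 :=
  match m with
  | O => mat2_id
  | S k => mat2_mul (B_E lam omega T E (theta + 2 * INR k * omega))
                    (B_E_iter lam omega T E k theta)
  end.

Definition lyap_term (lam omega : R) (T : Z -> R) (E : R) (m : nat) : R :=
  / (2 * INR m) *
  (RInt (fun theta => ln (opnorm (B_E_iter lam omega T E m theta))) 0 (2 * PI)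
   / (2 * PI)).

Definition lyapunov_is (lam omega : R) (T : Z -> R) (E l : R) : Prop :=
  is_lim_seq (lyap_term lam omega T E) l.

(* Main.v *)
Require Import Defs.
From Stdlib Require Import Reals ZArith QArith Lra Lia FunctionalExtensionality.
From Coquelicot Require Import Coquelicot.
Open Scope R_scope.

Definition hN (s x y : R) : R := sqrt ((x + s * y) ^ 2 + y ^ 2).
Definition G (s : R) : R :=
  real (Lub_Rbar (fun r => exists x y : R, x ^ 2 + y ^ 2 = 1 /\ r = hN s x y)).

Lemma sqrt_le_l X Y : 0 <= Y -> X <= Y ^ 2 -> sqrt X <= Y.
Proof. intros HY H. rewrite <- (sqrt_pow2 Y HY). now apply sqrt_le_1_alt. Qed.

Lemma hN_bound s x y : x ^ 2 + y ^ 2 = 1 -> hN s x y <= 1 + Rabs s.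
Proof.
  intros H. unfold hN. apply sqrt_le_l. pose proof (Rabs_pos s); lra.
  assert (Hx : Rabs x <= 1).
  { apply Rabs_le; split; nra. }
  assert (Hy : Rabs y <= 1).
  { apply Rabs_le; split; nra. }
  assert (E : (x + s * y) ^ 2 + y ^ 2 = 1 + 2 * s * (x*y) + s^2 * y^2) by nra.
  rewrite E.
  assert (s * (x*y) <= Rabs s).
  { apply Rle_trans with (Rabs (s * (x*y))). apply Rle_abs.
    rewrite !Rabs_mult. pose proof (Rabs_pos s). pose proof (Rabs_pos x). pose proof (Rabs_pos y).
    assert (Rabs x * Rabs y <= 1) by nra. nra. }
  assert (s^2 * y^2 <= Rabs s ^ 2).
  { rewrite pow2_abs. assert (y^2 <= 1) by nra. assert (0 <= s^2) by nra. nra. }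
  nra.
Qed.

Lemma G_spec s :
  (forall x y, x ^ 2 + y ^ 2 = 1 -> hN s x y <= G s) /\
  (forall B, (forall x y, x ^ 2 + y ^ 2 = 1 -> hN s x y <= B) -> G s <= B).
Proof.
  unfold G.
  destruct (Lub_Rbar_correct (fun r => exists x y : R, x ^ 2 + y ^ 2 = 1 /\ r = hN s x y)) as [Hub Hlub].
  assert (Hb := Hlub (Finite (1 + Rabs s))).
  assert (H1 := Hub (hN s 1 0)).
  destruct (Lub_Rbar _) as [l| |]; simpl in *.
  - split.
    + intros x y Hxy. apply (Hub (hN s x y)). exists x, y; auto.
    + intros B HB. apply (Hlub (Finite B)). intros r [x [y [Hxy ->]]]. simpl. auto.
  - exfalso. apply Hb. intros r [x [y [Hxy ->]]]. simpl. now apply hN_bound.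
  - exfalso. apply H1. exists 1, 0. split; [ring | auto].
Qed.

Lemma G_ge1 s : 1 <= G s.
Proof.
  destruct (G_spec s) as [H _].
  replace 1 with (hN s 1 0) at 1. apply H; ring.
  unfold hN. replace ((1 + s * 0) ^ 2 + 0 ^ 2) with 1 by ring. apply sqrt_1.
Qed.

Lemma G_le s : G s <= 1 + Rabs s.
Proof. destruct (G_spec s) as [_ H]. apply H. intros; now apply hN_bound. Qed.

Lemma tri a b d : sqrt ((a + d) ^ 2 + b ^ 2) <= sqrt (a ^ 2 + b ^ 2) + Rabs d.
Proof.
  assert (Ha : Rabs a <= sqrt (a ^ 2 + b ^ 2)).
  { rewrite <- (sqrt_pow2 (Rabs a) (Rabs_pos a)). apply sqrt_le_1_alt.
    rewrite pow2_abs. nra. }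
  pose proof (sqrt_pos (a^2+b^2)). pose proof (Rabs_pos d).
  apply sqrt_le_l. lra.
  assert (Hs : sqrt (a^2+b^2) ^ 2 = a^2+b^2).
  { rewrite <- Rsqr_pow2. apply Rsqr_sqrt. nra. }
  assert (a * d <= Rabs a * Rabs d).
  { rewrite <- Rabs_mult. apply Rle_abs. }
  assert (Rabs d ^ 2 = d ^ 2) by apply pow2_abs.
  nra.
Qed.

Lemma G_lip s s' : G s <= G s' + Rabs (s - s').
Proof.
  destruct (G_spec s) as [_ H]. apply H. intros x y Hxy.
  destruct (G_spec s') as [H' _].
  apply Rle_trans with (hN s' x y + Rabs ((s - s') * y)).
  - unfold hN. replace (x + s * y) with ((x + s' * y) + (s - s') * y) by ring. apply tri.
  - assert (Rabs y <= 1) by (apply Rabs_le; split; nra).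
    rewrite Rabs_mult. pose proof (Rabs_pos (s - s')). pose proof (H' x y Hxy). nra.
Qed.

Lemma G_cont s : continuity_pt G s.
Proof.
  unfold continuity_pt, continue_in, limit1_in, limit_in. simpl. unfold R_dist.
  intros eps Heps. exists eps. split; auto. intros x [_ Hx].
  apply Rabs_lt_between. split.
  - pose proof (G_lip s x). rewrite Rabs_minus_sym in H. lra.
  - pose proof (G_lip x s). lra.
Qed.

Fixpoint Ssum (lam t1 omega : R) (m : nat) (th : R) : R :=
  match m with
  | O => 0
  | S k => (0 - lam * t1 * cos (th + 2 * INR k * omega + omega)) + Ssum lam t1 omega k th
  end.

Lemma iter_closed lam t1 omega m th :
  B_E_iter lam omega (Tper 0 t1) 0 m th =
  (((-1) ^ m, (-1) ^ m * Ssum lam t1 omega m th), (0, (-1) ^ m)).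
Proof.
  induction m; simpl.
  - unfold mat2_id. f_equal; f_equal; ring.
  - rewrite IHm. unfold B_E, A_E, Tper, mat2_mul. simpl.
    f_equal; f_equal; ring.
Qed.

Lemma opnorm_closed m s :
  opnorm (((-1) ^ m, (-1) ^ m * s), (0, (-1) ^ m)) = G s.
Proof.
  unfold opnorm, G. f_equal. apply Lub_Rbar_eqset. intros r.
  assert (Hs : ((-1) ^ m) ^ 2 = 1).
  { rewrite <- pow_mult, (Nat.mul_comm m 2), pow_mult.
    replace ((-1)^2) with 1 by ring. apply pow1. }
  assert (E : forall x y, mat2_apply_norm (((-1) ^ m, (-1) ^ m * s), (0, (-1) ^ m)) x y = hN s x y).
  { intros x y. unfold mat2_apply_norm, hN. f_equal.
    transitivity (((-1)^m)^2 * ((x + s * y) ^ 2 + y ^ 2)). ring. rewrite Hs. ring. }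
  split; intros [x [y [H1 H2]]]; exists x, y; split; auto; rewrite H2, ?E; auto.
Qed.

Lemma Ssum_bound lam t1 omega m th :
  Rabs (Ssum lam t1 omega m th) <= INR m * Rabs (lam * t1).
Proof.
  induction m.
  - simpl. rewrite Rabs_R0. lra.
  - rewrite S_INR. cbn [Ssum]. eapply Rle_trans. apply Rabs_triang.
    replace (0 - lam * t1 * cos (th + 2 * INR m * omega + omega)) with
      (- ((lam * t1) * cos (th + 2 * INR m * omega + omega))) by ring.
    rewrite Rabs_Ropp, Rabs_mult.
    pose proof (COS_bound (th + 2 * INR m * omega + omega)) as Hc.
    assert (Rabs (cos (th + 2 * INR m * omega + omega)) <= 1) by (apply Rabs_le; lra).
    pose proof (Rabs_pos (lam * t1)). nra.
Qed.

Lemma Ssum_cont lam t1 omega m th : continuity_pt (Ssum lam t1 omega m) th.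
Proof.
  induction m; simpl.
  - apply continuity_pt_const. intros a b; reflexivity.
  - apply (continuity_pt_plus (fun th => 0 - lam * t1 * cos (th + 2 * INR m * omega + omega))
            (Ssum lam t1 omega m)); auto.
    reg.
Qed.

Lemma ln_le_sqrt y : 0 < y -> ln y <= 2 * sqrt y.
Proof.
  intros Hy.
  assert (Hq : 0 < sqrt y) by (apply sqrt_lt_R0; auto).
  replace y with (sqrt y ^ 2) at 1.
  rewrite ln_pow; auto. simpl INR.
  pose proof (exp_ineq1_le (ln (sqrt y))). rewrite exp_ln in H; auto. lra.
  rewrite <- Rsqr_pow2. apply Rsqr_sqrt. lra.
Qed.

Theorem mainTheorem2 (lam t0 t1 omega : R)
  (Hirr : ~ exists q : Q, omega / (2 * PI) = Q2R q)
  (Ht0 : t0 = 0) :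
  lyapunov_is lam omega (Tper t0 t1) 0 0.
Proof.
  subst t0. unfold lyapunov_is.
  set (K := Rabs (lam * t1)).
  assert (HK : 0 <= K) by apply Rabs_pos.
  assert (Hbd : forall m, (1 <= m)%nat ->
     0 <= lyap_term lam omega (Tper 0 t1) 0 m <= ln (1 + INR m * K) / (2 * INR m)).
  { intros m Hm.
    assert (Hm' : 1 <= INR m) by (apply (le_INR 1); auto).
    unfold lyap_term.
    set (f := fun theta => ln (opnorm (B_E_iter lam omega (Tper 0 t1) 0 m theta))).
    assert (Hf : f = fun th => ln (G (Ssum lam t1 omega m th))).
    { apply functional_extensionality. intro th. unfold f.
      now rewrite iter_closed, opnorm_closed. }
    rewrite Hf.
    assert (Hc : forall z, continuous (fun th => ln (G (Ssum lam t1 omega m th))) z).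
    { intro z. apply (continuous_comp (fun th => G (Ssum lam t1 omega m th)) ln).
      apply continuity_pt_filterlim. apply (continuity_pt_comp (Ssum lam t1 omega m) G z). apply Ssum_cont. apply G_cont.
      apply continuous_ln. pose proof (G_ge1 (Ssum lam t1 omega m z)). lra. }
    assert (Hex : ex_RInt (fun th => ln (G (Ssum lam t1 omega m th))) 0 (2 * PI)).
    { apply (@ex_RInt_continuous R_CompleteNormedModule). intros; apply Hc. }
    assert (HPI : 0 < PI) by apply PI_RGT_0.
    assert (Hc0 : forall c : R, ex_RInt (fun _ => c) 0 (2 * PI)).
    { intro c. apply ex_RInt_const. }
    assert (Hlow : RInt (fun _ => 0) 0 (2 * PI) <= RInt (fun th => ln (G (Ssum lam t1 omega m th))) 0 (2 * PI)).
    { apply RInt_le; auto. lra. intros x _. rewrite <- ln_1. apply ln_le. lra. apply G_ge1. }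
    assert (Hup : RInt (fun th => ln (G (Ssum lam t1 omega m th))) 0 (2 * PI) <= RInt (fun _ => ln (1 + INR m * K)) 0 (2 * PI)).
    { apply RInt_le; auto. lra. intros x _. apply ln_le.
      pose proof (G_ge1 (Ssum lam t1 omega m x)); lra.
      eapply Rle_trans. apply G_le. pose proof (Ssum_bound lam t1 omega m x). fold K in H. lra. }
    rewrite !RInt_const in Hlow, Hup. unfold scal in Hlow, Hup; simpl in Hlow, Hup.
    unfold mult in Hlow, Hup; simpl in Hlow, Hup.
    set (I := RInt _ 0 (2 * PI)) in *.
    assert (0 <= I / (2 * PI) <= ln (1 + INR m * K)).
    { split. apply Rmult_le_pos. lra. left; apply Rinv_0_lt_compat; lra.
      unfold Rdiv. apply Rmult_le_reg_r with (2 * PI). lra.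
      rewrite Rmult_assoc, Rinv_l by lra. lra. }
    assert (0 < / (2 * INR m)) by (apply Rinv_0_lt_compat; lra).
    split. apply Rmult_le_pos; lra.
    unfold Rdiv. rewrite (Rmult_comm (ln _)). apply Rmult_le_compat_l; lra. }
  apply is_lim_seq_spec. intros eps. simpl.
  set (e := pos eps). assert (He : 0 < e) by (apply cond_pos).
  destruct (archimed ((1 + K) / (e * e))) as [Ha _].
  assert (Hpos : 0 < (1 + K) / (e * e)) by (apply Rdiv_lt_0_compat; nra).
  assert (Hup : (0 < up ((1 + K) / (e * e)))%Z) by (apply lt_IZR; simpl; lra).
  exists (Z.to_nat (up ((1 + K) / (e * e)))). intros n Hn.
  assert (HN : (1 + K) / (e * e) < INR n).
  { eapply Rlt_le_trans. apply Ha. rewrite <- (Z2Nat.id (up _)) by lia.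
    rewrite <- INR_IZR_INZ. now apply le_INR. }
  assert (Hn1 : (1 <= n)%nat) by (destruct n; [simpl in HN; lra | lia]).
  assert (Hnr : 1 <= INR n) by (apply (le_INR 1); auto).
  destruct (Hbd n Hn1) as [H0 H1].
  rewrite Rminus_0_r, Rabs_pos_eq by lra.
  eapply Rle_lt_trans. apply H1.
  assert (Hl := ln_le_sqrt (1 + INR n * K) ltac:(nra)).
  assert (Hsq : sqrt (1 + INR n * K) < e * INR n).
  { rewrite <- (sqrt_pow2 (e * INR n)) by nra. apply sqrt_lt_1_alt. split. nra.
    assert (1 + K < e * e * INR n).
    { apply (Rmult_lt_compat_l (e*e)) in HN; [|nra].
      unfold Rdiv in HN. rewrite <- Rmult_assoc, (Rmult_comm (e*e)), Rmult_assoc, Rinv_r in HN by nra. lra. }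
    nra. }
  unfold Rdiv. apply Rmult_lt_reg_r with (2 * INR n). lra.
  rewrite Rmult_assoc, Rinv_l by lra. lra.
Qed.
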